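(* Let $\mathcal N$ be a feed-forward ReLU network with any fixed weights and biases, and let $\mathcal N^{\mathrm{bias}}_0$ be the network with the same weights and all biases set to $0$. Then the total number of (non-empty) activation regions in $\mathbb R^{n_{\mathrm{in}}}$ of $\mathcal N^{\mathrm{bias}}_0$ is at most that of $\mathcal N$.
   Context: A feed-forward ReLU network $\mathcal N$ with input dimension $n_{\mathrm{in}}$ and output dimension $1$ has hidden layers $1,\dots,d$; edges only between consecutive layers (arbitrary connectivity, no tied weights). A neuron $z$ in layer $1$ has pre-activation $z(x)=\sum_i w_{z,i}x_i$; a neuron $z$ in layer $\ell\ge2$ has pre-activation $z(x)=\sum_{z'}w_{z,z'}\max\{0,z'(x)-b_{z'}\}$ over neurons $z'$ of layer $\ell-1$ joined to $z$; $b_z$ is its bias. The output is $\mathcal N(x)=\sum_z w_z\max\{0,z(x)-b_z\}-b_{\mathrm{out}}$ over neurons of layer $d$. An activation region is a non-empty set $\{x:\ \mathrm{sgn}(z(x)-b_z)=a_z\text{ for every hidden neuron }z\}$ for some $a_z\in\{-1,1\}$. *)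

(* Defs.v *)
From HB Require Import structures.
From mathcomp Require Import all_boot all_order all_algebra.
From Stdlib Require Import ClassicalDescription.
Set Implicit Arguments. Unset Strict Implicit. Unset Printing Implicit Defensive.
Import Order.TTheory GRing.Theory Num.Theory.
Local Open Scope ring_scope.

(* A feed-forward ReLU network with input dimension nin and hidden layers
   0,...,d-1 (paper's layers 1,...,d); layer l has width w l.
   W l j i : weight of the edge from neuron i of layer l-1 (or input
   coordinate i if l = 0) into neuron j of layer l; an absent edge is a
   weight 0.  b l j : bias of neuron j of layer l. *)

(* pre-activation z(x) of neuron j in layer l (bias not subtracted) *)
Fixpoint preact (R : realFieldType) (nin : nat) (w : nat -> nat)
    (W : nat -> nat -> nat -> R) (b : nat -> nat -> R)
    (l : nat) (x : 'rV[R]_nin) (j : nat) : R :=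
  match l with
  | 0 => \sum_(i < nin) W 0%N j i * x ord0 i
  | l'.+1 => \sum_(i < w l') W l j i * Num.max 0 (preact w W b l' x i - b l' i)
  end.

Definition neuron (d : nat) (w : nat -> nat) : finType := {l : 'I_d & 'I_(w l)}.

(* activation pattern: true encodes +1, false encodes -1 *)
Definition pattern (d : nat) (w : nat -> nat) := {ffun neuron d w -> bool}.

Definition region_nonempty (R : realFieldType) (nin d : nat) (w : nat -> nat)
    (W : nat -> nat -> nat -> R) (b : nat -> nat -> R) (a : pattern d w) : Prop :=
  exists x : 'rV[R]_nin, forall z : neuron d w,
    Num.sg (preact w W b (tag z) x (tagged z) - b (tag z) (tagged z))
    = (if a z then 1 else -1).

Definition region_nonemptyb (R : realFieldType) (nin d : nat) (w : nat -> nat)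
    (W : nat -> nat -> nat -> R) (b : nat -> nat -> R) (a : pattern d w) : bool :=
  if excluded_middle_informative (region_nonempty nin W b a) then true else false.

Definition num_regions (R : realFieldType) (nin d : nat) (w : nat -> nat)
    (W : nat -> nat -> nat -> R) (b : nat -> nat -> R) : nat :=
  #|[set a : pattern d w | region_nonemptyb nin W b a]|.

(* Main.v *)
Require Import Defs.
From HB Require Import structures.
From mathcomp Require Import all_boot all_order all_algebra.
From mathcomp Require Import lra.
From Stdlib Require Import ClassicalDescription.
Import Order.TTheory GRing.Theory Num.Theory.
Local Open Scope ring_scope.

Lemma max0E (R : realFieldType) (u : R) : Num.max 0 u = if 0 <= u then u else 0.
Proof. by apply: maxEle. Qed.

Lemma max0_lip (R : realFieldType) (u v : R) :
  `|Num.max 0 u - Num.max 0 v| <= `|u - v|.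
Proof.
rewrite !max0E; case: (leP 0 u) => hu; case: (leP 0 v) => hv.
- by [].
- rewrite subr0 (ger0_norm hu) ger0_norm; lra.
- rewrite sub0r normrN (ger0_norm hv) ler0_norm; lra.
- by rewrite subrr normr0.
Qed.

Lemma max0_scale (R : realFieldType) (t v : R) : 0 <= t ->
  t * Num.max 0 v = Num.max 0 (t * v).
Proof.
move=> ht; rewrite !max0E; case: (leP 0 v) => hv.
  by rewrite mulr_ge0.
rewrite mulr0; case: ifP => // h; apply/eqP; rewrite eq_le h /=.
by rewrite mulr_ge0_le0 // ltW.
Qed.

Section S.
Variables (R : realFieldType) (nin : nat) (w : nat -> nat)
  (W : nat -> nat -> nat -> R) (b : nat -> nat -> R).

Fixpoint Cb (l j : nat) : R :=
  match l with
  | 0 => 0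
  | l'.+1 => \sum_(i < w l') `|W l j i| * (Cb l' i + `|b l' i|)
  end.

Lemma Cb_ge0 l j : 0 <= Cb l j.
Proof.
elim: l j => [|l IH] j /=; first by [].
apply: sumr_ge0 => i _; apply: mulr_ge0 => //; apply: addr_ge0 => //.
Qed.

Lemma err (t : R) l (x : 'rV[R]_nin) j : 0 <= t ->
  `|preact w W b l (t *: x) j - t * preact w W (fun _ _ => 0) l x j| <= Cb l j.
Proof.
move=> ht; elim: l j => [|l IH] j /=.
  rewrite mulr_sumr -sumrB big1 ?normr0 // => i _.
  by rewrite mxE mulrCA subrr.
rewrite mulr_sumr -sumrB; apply: (le_trans (ler_norm_sum _ _ _)).
apply: ler_sum => i _.
rewrite mulrCA -mulrBr normrM; apply: ler_wpM2l => //.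
rewrite subr0 max0_scale //.
rewrite (le_trans (max0_lip _ _ _)) // addrAC.
rewrite (le_trans (ler_normB _ _)) //.
by apply: lerD.
Qed.
End S.

Lemma sg_pert (R : realFieldType) (u e : R) : `|e| < `|u| -> Num.sg (u + e) = Num.sg u.
Proof.
move=> h; case: (ltrgt0P u) => hu.
- rewrite (gtr0_norm hu) in h.
  have hue : 0 < u + e by move: h; rewrite ltr_norml => /andP[h1 h2]; lra.
  by rewrite (gtr0_sg hu) (gtr0_sg hue).
- rewrite (ltr0_norm hu) in h.
  have hue : u + e < 0 by move: h; rewrite ltr_norml => /andP[h1 h2]; lra.
  by rewrite (ltr0_sg hu) (ltr0_sg hue).
- by move: h; rewrite hu normr0 ltNge normr_ge0.
Qed.

Theorem mainTheorem16 (R : realFieldType) (nin d : nat) (w : nat -> nat)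
    (W : nat -> nat -> nat -> R) (b : nat -> nat -> R) :
  (@num_regions R nin d w W (fun _ _ => 0%R) <= @num_regions R nin d w W b)%N.
Proof.
rewrite /num_regions; apply: subset_leq_card; apply/subsetP => a.
rewrite !inE /region_nonemptyb.
case: excluded_middle_informative => // [[x Hx]] _.
case: excluded_middle_informative => // H; exfalso; apply: H.
set p0 := fun z : neuron d w => preact w W (fun _ _ => 0) (tag z) x (tagged z).
set K := fun z : neuron d w => @Cb R w W b (tag z) (tagged z) + `|b (tag z) (tagged z)|.
have hp0 : forall z, p0 z != 0.
  move=> z; have := Hx z; rewrite subr0 /p0 => e; apply/eqP => h.
  move: e; rewrite h sgr0; case: (a z) => /eqP; rewrite eq_sym ?oppr_eq0 oner_eq0; by [].
have K0 : forall z, 0 <= K z by move=> z; apply: addr_ge0 => //; apply: (@Cb_ge0 R w W b).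
pose S := \sum_z K z / `|p0 z|.
have hS : forall z, K z / `|p0 z| <= S.
  move=> z; rewrite /S (bigD1 z) //= lerDl.
  by apply: sumr_ge0 => i _; apply: divr_ge0.
have S0 : 0 <= S by apply: sumr_ge0 => i _; apply: divr_ge0.
clearbody S.
pose t := 1 + S.
have t0 : 0 < t by rewrite /t; lra.
exists (t *: x) => z.
rewrite -(Hx z) subr0.
have Hp : 0 < `|p0 z| by rewrite normr_gt0.
have hK : K z < t * `|p0 z|.
  rewrite -ltr_pdivrMr //; have := hS z; rewrite /t; lra.
have E := @err R nin w W b t (tag z) x (tagged z) (ltW t0).
rewrite -/(p0 z) in E.
move: E hK; rewrite /K.
set pb := preact w W b (tag z) (t *: x) (tagged z).
set bz := b (tag z) (tagged z).
set C := Cb _ _ _ _ _ => E hK.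
have -> : pb - bz = t * p0 z + ((pb - t * p0 z) - bz) by rewrite [RHS]addrA [t * _ + _]addrC subrK.
rewrite sg_pert; last first.
  rewrite normrM (gtr0_norm t0).
  apply: le_lt_trans hK; apply: le_trans (ler_normB _ _) _.
  by apply: lerD.
by rewrite sgrM (gtr0_sg t0) mul1r.
Qed.
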